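(* Let $p,q\in\mathbb{G}^n$ with $\|p-q\|\ge2$. Then $\lceil(p+q)/2\rceil\notin\{p,q\}$ and $\lfloor(p+q)/2\rfloor\notin\{p,q\}$. Moreover, $\|p-\lceil(p+q)/2\rceil\|<\|p-q\|$ and $\|p-\lfloor(p+q)/2\rfloor\|<\|p-q\|$.
   Context: Fix an integer $k\ge1$. The infinite $k$-star $\mathbb{T}$ is $\mathbb{R}_+\times\{1,\dots,k\}$ with all points $(0,s)$ identified to a point $0$; $(x,s)$ is also written $x$; $\mathrm{dist}((x,s),(x',s'))=|x-x'|$ if $s=s'$ and $x+x'$ otherwise. The midpoint $(x+x')/2$ is the unique $u\in\mathbb{T}$ with $\mathrm{dist}(x,u)=\mathrm{dist}(u,x')=\mathrm{dist}(x,x')/2$. $x$ is integral if $\mathrm{dist}(x,0)\in\mathbb{Z}$, proper half-integral if $2\mathrm{dist}(x,0)\in\mathbb{Z}$ but $\mathrm{dist}(x,0)\notin\mathbb{Z}$. $\mathbb{G}\subseteq\mathbb{T}\times\mathbb{R}$ is the set of $(x,y)$ with $x,y$ both integral or both proper half-integral; $(x,y)\in\mathbb{G}$ is integral if both are integral, and then even if $\mathrm{dist}(x,0)-y$ is even, odd otherwise. For $p=(x,y),q=(x',y')\in\mathbb{T}\times\mathbb{R}$, $\|p-q\|=\mathrm{dist}(x,x')+|y-y'|$ and $(p+q)/2=((x+x')/2,(y+y')/2)$. $p,q\in\mathbb{G}$ are adjacent if $\|p-q\|=1$ and exactly one is integral; then $p\prec q$ if $p$ is even or $q$ is odd, and $\preceq$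 is the reflexive transitive closure. For $p,q\in\mathbb{G}$ there is a unique pair $u\preceq v$ in $\mathbb{G}$ with $(u+v)/2=(p+q)/2$; set $\lfloor(p+q)/2\rfloor=u$, $\lceil(p+q)/2\rceil=v$. On $\mathbb{G}^n$ these operations are taken componentwise, and $\|p-q\|:=\max_{1\le i\le n}\|p_i-q_i\|$. *)

(* Defs.v *)
From HB Require Import structures.
From mathcomp Require Import all_boot all_order all_algebra.
From mathcomp Require Import reals.
From Stdlib Require Import ClassicalEpsilon Relations.
Set Implicit Arguments. Unset Strict Implicit. Unset Printing Implicit Defensive.
Import Order.TTheory GRing.Theory Num.Theory.
Local Open Scope ring_scope.

Section Star.
Variables (R : realType) (k : nat).

(* The infinite k-star: pairs (x, s), x >= 0, s a ray index in 'I_k; all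
   points (0, s) are identified with the canonical representative (0, ord 0). *)
Definition tstar_ok (xs : R * 'I_k) : bool :=
  (0 <= xs.1) && ((xs.1 == 0) ==> (nat_of_ord xs.2 == 0%N)).
Definition Tstar := {xs : R * 'I_k | tstar_ok xs}.

Definition tpos (x : Tstar) : R := (sval x).1.
Definition tray (x : Tstar) : 'I_k := (sval x).2.

Definition tdist (x x' : Tstar) : R :=
  if tray x == tray x' then `|tpos x - tpos x'| else tpos x + tpos x'.

Definition is_tmid (x x' u : Tstar) : Prop :=
  tdist x u = tdist x x' / 2 /\ tdist u x' = tdist x x' / 2.
Definition tmid (x x' : Tstar) : Tstar := epsilon (inhabits x) (is_tmid x x').

Definition integral_t (x : Tstar) : Prop := tpos x \is a Num.int.
Definition phalf_t (x : Tstar) : Prop :=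
  (2 * tpos x \is a Num.int) /\ ~ (tpos x \is a Num.int).
Definition integral_r (y : R) : Prop := y \is a Num.int.
Definition phalf_r (y : R) : Prop := (2 * y \is a Num.int) /\ ~ (y \is a Num.int).

Definition Gpt := (Tstar * R)%type.

Definition inG (p : Gpt) : Prop :=
  (integral_t p.1 /\ integral_r p.2) \/ (phalf_t p.1 /\ phalf_r p.2).
Definition gintegral (p : Gpt) : Prop := integral_t p.1 /\ integral_r p.2.
Definition geven (p : Gpt) : Prop :=
  gintegral p /\ exists m : int, tpos p.1 - p.2 = 2 * m%:~R.
Definition godd (p : Gpt) : Prop := gintegral p /\ ~ geven p.

Definition gnorm (p q : Gpt) : R := tdist p.1 q.1 + `|p.2 - q.2|.
Definition gmid (p q : Gpt) : Gpt := (tmid p.1 q.1, (p.2 + q.2) / 2).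

Definition gadj (p q : Gpt) : Prop :=
  inG p /\ inG q /\ gnorm p q = 1 /\
  ((gintegral p /\ ~ gintegral q) \/ (~ gintegral p /\ gintegral q)).
Definition gprec (p q : Gpt) : Prop := gadj p q /\ (geven p \/ godd q).
Definition gle : Gpt -> Gpt -> Prop := clos_refl_trans Gpt gprec.

Definition gpair_spec (p q : Gpt) (uv : Gpt * Gpt) : Prop :=
  inG uv.1 /\ inG uv.2 /\ gle uv.1 uv.2 /\ gmid uv.1 uv.2 = gmid p q.
Definition gpair (p q : Gpt) : Gpt * Gpt :=
  epsilon (inhabits (p, q)) (gpair_spec p q).
Definition gfloor (p q : Gpt) : Gpt := (gpair p q).1.
Definition gceil (p q : Gpt) : Gpt := (gpair p q).2.

Definition gfloorv n (p q : 'I_n -> Gpt) : 'I_n -> Gpt := fun i => gfloor (p i) (q i).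
Definition gceilv n (p q : 'I_n -> Gpt) : 'I_n -> Gpt := fun i => gceil (p i) (q i).
Definition gnormv n (p q : 'I_n -> Gpt) : R :=
  \big[Num.max/0]_(i < n) gnorm (p i) (q i).

End Star.

(* Main.v *)
Require Import Defs.
From HB Require Import structures.
From mathcomp Require Import all_boot all_order all_algebra.
From mathcomp Require Import reals.
From mathcomp Require Import ring lra.
From Stdlib Require Import ClassicalEpsilon Relations Classical.
From mathcomp Require Import zify.
Import Order.TTheory GRing.Theory Num.Theory.
Local Open Scope ring_scope.


Notation gn := Defs.gnorm.

Ltac split_eqs :=
  repeat (first [ progress rewrite eqxx /=
    | match goal with |- context[?a == ?b] =>
      lazymatch type of a with ordinal _ => case: (a =P b) => [?|?]; try subst end end]).
Ltac split_abs :=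
  repeat match goal with |- context[`|?z|] => case: (ger0P z) => ? end.
Ltac star_close := split_eqs; split_abs; intros; try (exfalso; congruence); lra.

Ltac dpt x := let a := fresh "a" in let s := fresh "s" in let ha := fresh "ha" in let hs := fresh "hs" in
  let H := fresh "H" in
  case: x => [[a s] H]; have := H; rewrite /tstar_ok /=; move=> /andP[ha hs]; move/implyP: hs => hs.

Lemma tdist_sym {R : realType} {k : nat} (x y : Tstar R k) : tdist x y = tdist y x.
Proof. dpt x; dpt y; rewrite /tdist /tpos /tray /=. star_close. Qed.

Lemma tdist_tri {R : realType} {k : nat} (x y z : Tstar R k) :
  tdist x z <= tdist x y + tdist y z.
Proof. dpt x; dpt y; dpt z; rewrite /tdist /tpos /tray /=. star_close. Qed.

Definition o0 {k} (hk : (0 < k)%N) : 'I_k := Ordinal hk.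

Lemma mkT_ok {R : realType} {k : nat} (hk : (0 < k)%N) (t : R) (r : 'I_k) :
  tstar_ok (if 0 < t then (t, r) else (0, o0 hk)).
Proof.
rewrite /tstar_ok; case: ifP => /= ht; last by rewrite lexx eqxx.
by rewrite ltW //= (gt_eqF ht).
Qed.

Definition mkT {R : realType} {k : nat} (hk : (0 < k)%N) (t : R) (r : 'I_k) : Tstar R k :=
  exist (fun xs => tstar_ok xs) _ (mkT_ok hk t r).

Lemma mkT_pos {R : realType} {k : nat} (hk : (0 < k)%N) (t : R) r :
  0 <= t -> tpos (mkT hk t r) = t.
Proof. rewrite /mkT /tpos /=; case: ifP => //= ht h0; have := negbT ht; rewrite -leNgt => h; lra. Qed.

Lemma mkT_eta {R : realType} {k : nat} (hk : (0 < k)%N) (x : Tstar R k) :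
  mkT hk (tpos x) (tray x) = x.
Proof.
apply: val_inj; dpt x; rewrite /mkT /tpos /tray /=.
case: ifP => // ht.
have a0 : a = 0 by have := negbT ht; rewrite -leNgt => h; lra.
by subst a; have := hs (eqxx _) => /eqP hs0; congr pair; apply: val_inj.
Qed.

Lemma tdist_mkT {R : realType} {k : nat} (hk : (0 < k)%N) (t t' : R) r :
  0 <= t -> 0 <= t' -> tdist (mkT hk t r) (mkT hk t' r) = `|t - t'|.
Proof.
rewrite /tdist /mkT /tpos /tray /=.
case: (ltrP 0 t) => h1; case: (ltrP 0 t') => h2 /= ? ?; star_close.
Qed.


Lemma teq {R : realType} {k : nat} (x y : Tstar R k) :
  tpos x = tpos y -> tray x = tray y -> x = y.
Proof. dpt x; dpt y; rewrite /tpos /tray /= => e1 e2; apply: val_inj => /=; by rewrite e1 e2. Qed.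

Lemma tpos_ge0 {R : realType} {k : nat} (x : Tstar R k) : 0 <= tpos x.
Proof. by dpt x. Qed.

Lemma tpos0 {R : realType} {k : nat} (x : Tstar R k) : tpos x = 0 -> nat_of_ord (tray x) = 0%N.
Proof. dpt x; rewrite /tpos /tray /= => a0; subst a; by apply/eqP; apply: hs. Qed.

Definition fv {R : realType} {k : nat} (x : Tstar R k) (r : 'I_k) : R :=
  if tray x == r then tpos x else - tpos x.

Lemma fv_lip {R : realType} {k : nat} (x y : Tstar R k) r :
  `|fv x r - fv y r| <= tdist x y.
Proof. rewrite /fv; dpt x; dpt y; rewrite /tdist /tpos /tray /=. star_close. Qed.

Lemma fv_dist {R : realType} {k : nat} (x y : Tstar R k) :
  tdist x y = `|fv x (tray x) - fv y (tray x)| /\ tdist x y = `|fv x (tray y) - fv y (tray y)|.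
Proof. rewrite /fv; dpt x; dpt y; rewrite /tdist /tpos /tray /=. split; star_close. Qed.

Lemma fv_abs {R : realType} {k : nat} (x : Tstar R k) r : tpos x = `|fv x r|.
Proof. rewrite /fv; dpt x; rewrite /tpos /tray /=. star_close. Qed.

Lemma fv_pos {R : realType} {k : nat} (x : Tstar R k) r : 0 < fv x r -> tray x = r.
Proof. rewrite /fv; case: eqP => // _; have := tpos_ge0 x => ? ?; exfalso; lra. Qed.

Lemma mid_real {R : realType} (fx fy fu d : R) :
  `|fx - fu| <= d / 2 -> `|fu - fy| <= d / 2 -> d = `|fx - fy| -> fu = (fx + fy) / 2.
Proof. split_abs; intros; lra. Qed.

Lemma geo_ray {R : realType} {k : nat} (x y u : Tstar R k) :
  is_tmid x y u -> tray u != tray x -> tray u != tray y -> tpos u = 0.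
Proof.
rewrite /is_tmid => -[e1 e2] /eqP n1 /eqP n2; move: e1 e2 n1 n2.
dpt x; dpt y; dpt u; rewrite /tdist /tpos /tray /=. star_close.
Qed.

Lemma tmid_uniq {R : realType} {k : nat} (x y u1 u2 : Tstar R k) :
  is_tmid x y u1 -> is_tmid x y u2 -> u1 = u2.
Proof.
move=> h1 h2.
have fm : forall u r, is_tmid x y u -> (r = tray x \/ r = tray y) -> fv u r = (fv x r + fv y r) / 2.
  move=> u r [e1 e2] hr; apply: (@mid_real _ _ _ _ (tdist x y)).
  - by rewrite -e1; apply: fv_lip.
  - by rewrite -e2; apply: fv_lip.
  - by case: hr => ->; case: (fv_dist x y).
have fs : fv u1 (tray x) = fv u2 (tray x) by rewrite (fm u1 _ h1 (or_introl erefl)) (fm u2 _ h2 (or_introl erefl)).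
have fs' : fv u1 (tray y) = fv u2 (tray y) by rewrite (fm u1 _ h1 (or_intror erefl)) (fm u2 _ h2 (or_intror erefl)).
have ep : tpos u1 = tpos u2 by rewrite (fv_abs u1 (tray x)) (fv_abs u2 (tray x)) fs.
apply: teq => //.
have [z|nz] := eqVneq (tpos u1) 0.
  apply: ord_inj; rewrite (tpos0 _ z) (tpos0 u2) //; by rewrite -ep.
have pos : 0 < tpos u1 by rewrite lt_def nz tpos_ge0.
have [ex|nx] := eqVneq (tray u1) (tray x).
  have : 0 < fv u1 (tray x) by rewrite /fv ex eqxx.
  by rewrite fs => /fv_pos ->.
have [ey|ny] := eqVneq (tray u1) (tray y).
  have : 0 < fv u1 (tray y) by rewrite /fv ey eqxx.
  by rewrite fs' => /fv_pos ->.
by move: nz; rewrite (geo_ray _ _ _ h1 nx ny) eqxx.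
Qed.

Definition tmidE {R : realType} {k : nat} (hk : (0 < k)%N) (x y : Tstar R k) : Tstar R k :=
  if tray x == tray y then mkT hk ((tpos x + tpos y) / 2) (tray x)
  else if tpos y <= tpos x then mkT hk ((tpos x - tpos y) / 2) (tray x)
  else mkT hk ((tpos y - tpos x) / 2) (tray y).

Lemma mkT_posE {R : realType} {k : nat} (hk : (0 < k)%N) (t : R) r :
  tpos (mkT hk t r) = if 0 < t then t else 0.
Proof. by rewrite /tpos /mkT /=; case: ifP. Qed.

Lemma mkT_trayE {R : realType} {k : nat} (hk : (0 < k)%N) (t : R) r :
  tray (mkT hk t r) = if 0 < t then r else o0 hk.
Proof. by rewrite /tray /mkT /=; case: ifP. Qed.

Ltac split_lt :=
  repeat match goal with |- context[if 0 < ?t then _ else _] => case: (ltrP 0 t) => ? end.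

Lemma tmidE_spec {R : realType} {k : nat} (hk : (0 < k)%N) (x y : Tstar R k) :
  is_tmid x y (tmidE hk x y).
Proof.
rewrite /tmidE /is_tmid /tdist; have := tpos_ge0 x; have := tpos_ge0 y.
move: (tpos x) (tpos y) (tray x) (tray y) => a b s t hb ha.
case: (s =P t) => [<-|ne]; rewrite ?eqxx /=.
  rewrite !mkT_posE !mkT_trayE; split; split_lt; star_close.
case: (lerP b a) => h1; rewrite !mkT_posE !mkT_trayE; split; split_lt; star_close.
Qed.

Lemma kpos {R : realType} {k : nat} (x : Tstar R k) : (0 < k)%N.
Proof. exact: leq_ltn_trans (leq0n _) (ltn_ord (tray x)). Qed.

Lemma tmid_spec {R : realType} {k : nat} (x y : Tstar R k) : is_tmid x y (tmid x y).
Proof. rewrite /tmid; apply: epsilon_spec; exists (tmidE (kpos x) x y); exact: tmidE_spec. Qed.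

Lemma tmid_eq {R : realType} {k : nat} (x y c : Tstar R k) : is_tmid x y c -> tmid x y = c.
Proof. move=> h; apply: tmid_uniq (tmid_spec x y) h. Qed.

Lemma tdist_xx {R : realType} {k : nat} (x : Tstar R k) : tdist x x = 0.
Proof. by rewrite /tdist eqxx subrr normr0. Qed.

Lemma gnorm_sym {R : realType} {k : nat} (p q : Gpt R k) : gn p q = gn q p.
Proof. by rewrite /Defs.gnorm tdist_sym distrC. Qed.

Lemma gnorm_tri {R : realType} {k : nat} (p q r : Gpt R k) : gn p r <= gn p q + gn q r.
Proof.
rewrite /Defs.gnorm; have := tdist_tri p.1 q.1 r.1; have := ler_distD q.2 p.2 r.2; lra.
Qed.

Lemma gnorm_xx {R : realType} {k : nat} (p : Gpt R k) : gn p p = 0.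
Proof. by rewrite /Defs.gnorm tdist_xx subrr normr0 addr0. Qed.

Lemma gnorm_mid {R : realType} {k : nat} (p q : Gpt R k) :
  gn p (gmid p q) = gn p q / 2 /\ gn (gmid p q) q = gn p q / 2.
Proof.
rewrite /Defs.gnorm /gmid /=; have [e1 e2] := tmid_spec p.1 q.1; rewrite e1 e2.
by split; split_abs; intros; lra.
Qed.


Notation isint x := (x \is a Num.int).

Ltac int_tac := repeat (first [ done | rewrite rpredB | rewrite rpredD | rewrite rpredN | rewrite rpredM | rewrite rpred1 | rewrite rpred0 ]).

Lemma parity {R : realType} (x : R) : isint x -> exists w : R, isint w /\ (x = w + w \/ x = w + w + 1).
Proof.
move=> /intrP[z ->].
have : exists a : int, z = a + a \/ z = a + a + 1.
  have h1 := divz_eq z 2; have h2 : (0 <= modz z 2)%R by apply: modz_ge0.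
  have h3 : (modz z 2 < 2)%R by apply: ltz_pmod.
  exists (divz z 2); move: h1 h2 h3; move: (divz z 2) (modz z 2) => a b; clear; lia.
case=> a h; exists a%:~R; split; first exact: intr_int.
by case: h => ->; rewrite !intrD; [left|right].
Qed.

Lemma odd_even {R : realType} (w w' : R) : isint w -> isint w' -> w + w <> w' + w' + 1.
Proof.
move=> /intrP[z ->] /intrP[z' ->] e.
have : ((z + z)%:~R : R) = (z' + z' + 1)%:~R by rewrite !intrD e.
move/intr_inj; lia.
Qed.

Lemma int_ge0 {R : realType} (z : R) : isint z -> -1 < z -> 0 <= z.
Proof.
move=> /intrP[n ->] h; rewrite ler0z; case: (lerP 0 n) => // hn; exfalso.
have : ((n + 1)%:~R : R) <= 0 by rewrite lerz0; lia.
rewrite intrD; lra.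
Qed.

Lemma phalfE {R : realType} (y : R) : phalf_r y <-> isint (y - 1/2).
Proof.
split.
  case=> h2 hn; have [w [hw [e|e]]] := parity _ h2.
    by exfalso; apply: hn; have -> : y = w by lra.
  by have -> : y - 1/2 = w by lra.
move=> h; split; first by (have -> : 2 * y = (y - 1/2) + (y - 1/2) + 1 by lra); int_tac.
move=> hy; apply: (@odd_even _ y (y - 1/2) hy h); lra.
Qed.

Definition gi {R : realType} {k : nat} (P : Gpt R k) := isint (tpos P.1) /\ isint P.2.
Definition gh {R : realType} {k : nat} (P : Gpt R k) := isint (tpos P.1 - 1/2) /\ isint (P.2 - 1/2).

Lemma inGE {R : realType} {k : nat} (P : Gpt R k) : inG P <-> gi P \/ gh P.
Proof.
rewrite /inG /gi /gh /integral_t /integral_r /phalf_t -/(phalf_r (tpos P.1)) !phalfE.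
by [].
Qed.

Lemma gintE {R : realType} {k : nat} (P : Gpt R k) : gintegral P <-> gi P.
Proof. by []. Qed.

Lemma gi_gh {R : realType} {k : nat} (P : Gpt R k) : gi P -> gh P -> False.
Proof.
case=> _ h1 [_ h2]; apply: (@odd_even _ P.2 (P.2 - 1/2) h1 h2); lra.
Qed.

Lemma gprec_cases {R : realType} {k : nat} (a b : Gpt R k) : gprec a b ->
  gn a b = 1 /\ ((geven a /\ ~ gintegral b) \/ (~ gintegral a /\ godd b)).
Proof.
case=> [[ia [ib [d hx]]] [he|ho]]; split=> //.
  left; split=> //; case: hx => -[] //; by case: he.
right; split=> //; case: hx => -[] //; by case: ho.
Qed.

Lemma no3 {R : realType} {k : nat} (a b c d : Gpt R k) : gprec a b -> gprec b c -> gprec c d -> False.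
Proof.
move=> /gprec_cases[_ [[_ nb]|[_ ob]]] /gprec_cases[_ [[eb nc]|[nb' oc]]] /gprec_cases[_ [[ec _]|[nc' _]]].
all: try (by apply: nb; case: eb).
all: try (by case: oc => _ /(_ ec)).
all: try (by apply: nc'; case: oc).
all: try (by case: ob => _ /(_ eb)).
all: try (by apply: nb'; case: ob).
Qed.

Lemma gle_cases {R : realType} {k : nat} (u v : Gpt R k) : gle u v ->
  u = v \/ gprec u v \/ exists w, gprec u w /\ gprec w v.
Proof.
move=> h; have {h} := clos_rt_rt1n _ _ _ _ h; elim=> [x|x y z hxy _ IH]; first by left.
case: IH => [<-|[h|[w [h1 h2]]]].
- by right; left.
- by right; right; exists y.
- by exfalso; apply: (no3 _ _ _ _ hxy h1 h2).
Qed.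

Lemma abs_par {R : realType} (a b : R) : isint a -> isint b ->
  exists W, isint W /\ a + b - `|a - b| = W + W.
Proof. move=> ha hb; case: (ger0P (a - b)) => h; [exists b | exists a]; split=> //; lra. Qed.

Lemma tdist_par {R : realType} {k : nat} (x y : Tstar R k) : isint (tpos x) -> isint (tpos y) ->
  exists W, isint W /\ tpos x + tpos y - tdist x y = W + W.
Proof.
move=> ha hb; rewrite /tdist; case: eqP => _; first exact: abs_par.
by exists 0; split; [exact: rpred0 | lra].
Qed.

Lemma even_odd_dist {R : realType} {k : nat} (u v : Gpt R k) : geven u -> godd v -> gn u v <> 2.
Proof.
move=> [[ia iy1] [m hm]] [[ib iy2] ne].
have iv : isint (tpos v.1 - v.2) by int_tac.
have [w [hw [e|e]]] := parity _ iv.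
  apply: False_ind; apply: ne; split=> //; case/intrP: hw => z ez; exists z; rewrite -ez; lra.
have [W1 [i1 e1]] := tdist_par _ _ ia ib.
have [W2 [i2 e2]] := abs_par _ _ iy1 iy2.
rewrite /Defs.gnorm => hg.
apply: (@odd_even _ (1 + W1 + W2) (m%:~R + w + u.2 + v.2)).
- by int_tac.
- by rewrite rpredD ?rpredD //; exact: intr_int.
- lra.
Qed.

Lemma gn_ge0 {R : realType} {k : nat} (p q : Gpt R k) : 0 <= gn p q.
Proof. have := gnorm_tri p q p; rewrite gnorm_xx (gnorm_sym q p); lra. Qed.

Lemma gle_lt2 {R : realType} {k : nat} (u v : Gpt R k) : gle u v -> gn u v < 2.
Proof.
case/gle_cases => [<-|[/gprec_cases[-> _]|[w [h1 h2]]]]; first by rewrite gnorm_xx; lra.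
  lra.
have := gnorm_tri u w v.
move: (h1) (h2) => /gprec_cases[d1 c1] /gprec_cases[d2 c2].
have [eu ov] : geven u /\ godd v.
  case: c1 => [[eu nw]|[nu ow]]; case: c2 => [[ew nv]|[nw' ov]].
  - by case: nw; case: ew.
  - by [].
  - by case: ow => _ /(_ ew).
  - by case: nw'; case: ow.
have := even_odd_dist _ _ eu ov.
rewrite d1 d2 => ne hle; rewrite lt_neqAle; apply/andP; split; last lra.
by apply/eqP.
Qed.

Lemma comp_bounds {R : realType} {k : nat} (p q u v : Gpt R k) :
  gpair_spec p q (u, v) ->
  (gn p v < gn p q / 2 + 1 /\ gn p u < gn p q / 2 + 1) /\
  (gn p q / 2 - 1 < gn p v /\ gn p q / 2 - 1 < gn p u) /\
  (gn p q / 2 - 1 < gn v q /\ gn p q / 2 - 1 < gn u q).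
Proof.
case=> /= _ [_ [hle hm]].
have e2 := gle_lt2 _ _ hle.
have e0 := gn_ge0 u v.
have [m1 m2] := gnorm_mid p q.
have [m3 m4] := gnorm_mid u v.
rewrite hm in m3 m4.
have t1 := gnorm_tri p (gmid p q) v.
have t2 := gnorm_tri p (gmid p q) u.
have t3 := gnorm_tri p v (gmid p q).
have t4 := gnorm_tri p u (gmid p q).
have t5 := gnorm_tri (gmid p q) v q.
have t6 := gnorm_tri (gmid p q) u q.
move: t1 t2 t3 t4 t5 t6.
rewrite (gnorm_sym (gmid p q) u) (gnorm_sym v (gmid p q)) m1 m2 m3 m4.
move=> *; (repeat split); lra.
Qed.


Lemma tpos_tmid {R : realType} {k : nat} (x y : Tstar R k) :
  2 * tpos (tmid x y) = tpos x + tpos y \/ 2 * tpos (tmid x y) = tpos x - tpos y \/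
  2 * tpos (tmid x y) = tpos y - tpos x.
Proof.
rewrite (tmid_eq _ _ _ (tmidE_spec (kpos x) x y)) /tmidE.
have := tpos_ge0 x; have := tpos_ge0 y => h1 h2.
case: ifP => _; last case: lerP => h3; rewrite mkT_pos; lra.
Qed.

Lemma inG_ints {R : realType} {k : nat} (P : Gpt R k) : inG P ->
  isint (tpos P.1 - P.2) /\ isint (tpos P.1 + P.2) /\ isint (2 * P.2).
Proof.
case/inGE => [[h1 h2]|[h1 h2]].
  split; first by int_tac.
  split; first by int_tac.
  by rewrite (_ : 2 * P.2 = P.2 + P.2); [int_tac | lra].
split; first by rewrite (_ : tpos P.1 - P.2 = (tpos P.1 - 1/2) - (P.2 - 1/2)); [int_tac|lra].
split; first by rewrite (_ : tpos P.1 + P.2 = (tpos P.1 - 1/2) + (P.2 - 1/2) + 1); [int_tac|lra].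
by rewrite (_ : 2 * P.2 = (P.2 - 1/2) + (P.2 - 1/2) + 1); [int_tac|lra].
Qed.

Lemma gn_mkT {R : realType} {k : nat} (hk : (0 < k)%N) (a b y y' : R) r :
  0 <= a -> 0 <= b -> gn (mkT hk a r, y) (mkT hk b r, y') = `|a - b| + `|y - y'|.
Proof. by move=> ha hb; rewrite /Defs.gnorm /= tdist_mkT. Qed.

Lemma tmid_shift {R : realType} {k : nat} (hk : (0 < k)%N) (t d : R) r :
  0 <= t - d -> 0 <= d ->
  tmid (mkT hk (t - d) r) (mkT hk (t + d) r) = mkT hk t r /\
  tmid (mkT hk (t + d) r) (mkT hk (t - d) r) = mkT hk t r.
Proof.
move=> h1 h2; split; apply: tmid_eq; rewrite /is_tmid !tdist_mkT //; try lra;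
  split; split_abs; intros; lra.
Qed.

Lemma tmid_xx {R : realType} {k : nat} (c : Tstar R k) : tmid c c = c.
Proof. by apply: tmid_eq; rewrite /is_tmid tdist_xx; split; lra. Qed.

Definition okp {R : realType} {k : nat} (M : Gpt R k) (uv : Gpt R k * Gpt R k) :=
  inG uv.1 /\ inG uv.2 /\ gle uv.1 uv.2 /\ gmid uv.1 uv.2 = M.

Lemma close_same {R : realType} {k : nat} (M : Gpt R k) : inG M -> exists uv, okp M uv.
Proof.
move=> h; exists (M, M); split=> //; split=> //; split; first exact: rt_refl.
case: M {h} => x y; rewrite /gmid /= tmid_xx; congr pair; lra.
Qed.

Lemma nint_of_half {R : realType} {k : nat} (P : Gpt R k) : gh P -> ~ gintegral P.
Proof. by move=> h1 h2; apply: (gi_gh _ h2 h1). Qed.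

Lemma even_of {R : realType} {k : nat} (P : Gpt R k) : gi P ->
  (exists w, isint w /\ tpos P.1 - P.2 = w + w) -> geven P.
Proof. move=> h [w [/intrP[z ez] e]]; split=> //; exists z; rewrite e ez; lra. Qed.

Lemma odd_of {R : realType} {k : nat} (P : Gpt R k) : gi P ->
  (exists w, isint w /\ tpos P.1 - P.2 = w + w + 1) -> godd P.
Proof.
move=> h [w [hw e]]; split=> // -[_ [z ez]].
apply: (@odd_even _ z%:~R w); [exact: intr_int | exact: hw | lra].
Qed.

Lemma close_one {R : realType} {k : nat} (P1 P2 M : Gpt R k) : inG P1 -> inG P2 -> gn P1 P2 = 1 ->
  (gi P1 /\ gh P2 \/ gh P1 /\ gi P2) -> gmid P1 P2 = M -> gmid P2 P1 = M -> exists uv, okp M uv.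
Proof.
suff H : forall I H : Gpt R k, inG I -> inG H -> gn I H = 1 -> gi I -> gh H ->
    gmid I H = M -> gmid H I = M -> exists uv, okp M uv.
  move=> h1 h2 d [[a b]|[a b]] e1 e2; first exact: (H _ _ h1 h2 d a b e1 e2).
  by apply: (H _ _ h2 h1 _ b a e2 e1); rewrite gnorm_sym.
move=> I H hI hH d iI hh e1 e2.
have nH := nint_of_half _ hh.
case: (classic (geven I)) => ev.
  exists (I, H); split=> //; split=> //; split=> //; apply: rt_step.
  by split; [split; [|split; [|split; [|left]]] | left].
exists (H, I); split=> //; split=> //; split=> //; apply: rt_step.
split; last by right.
by split; [|split; [|split; [rewrite gnorm_sym|right]]].
Qed.

Lemma chain2 {R : realType} {k : nat} (A W B : Gpt R k) : inG A -> inG W -> inG B ->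
  geven A -> godd B -> gh W -> gn A W = 1 -> gn W B = 1 -> gle A B.
Proof.
move=> iA iW iB eA oB hW d1 d2; have nW := nint_of_half _ hW.
apply: (rt_trans _ _ _ W); apply: rt_step.
  by split; [split; [|split; [|split; [|left; split=> //; case: eA]]] | left].
by split; [split; [|split; [|split; [|right; split=> //; case: oB]]] | right].
Qed.

Lemma close_two {R : realType} {k : nat} (P1 P2 W M : Gpt R k) : inG P1 -> inG P2 -> inG W ->
  gi P1 -> gi P2 -> gh W -> gn P1 W = 1 -> gn W P2 = 1 ->
  (tpos P1.1 - P1.2 = tpos P2.1 - P2.2 + 1 \/ tpos P2.1 - P2.2 = tpos P1.1 - P1.2 + 1) ->
  gmid P1 P2 = M -> gmid P2 P1 = M -> exists uv, okp M uv.
Proof.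
move=> i1 i2 iW g1 g2 hW d1 d2 hz e1 e2.
have z1 : isint (tpos P1.1 - P1.2) by case: g1 => ? ?; int_tac.
have [w [hw [e|e]]] := parity _ z1.
- exists (P1, P2); split=> //; split=> //; split=> //.
  apply: (chain2 _ W) => //; first by apply: even_of => //; exists w.
  case: hz => hz.
    by apply: odd_of => //; exists (w - 1); split; [int_tac | lra].
  by apply: odd_of => //; exists w; split; [int_tac | lra].
- exists (P2, P1); split=> //; split=> //; split=> //.
  apply: (chain2 _ W) => //; last by rewrite gnorm_sym.
  + case: hz => hz.
      by apply: even_of => //; exists w; split; [int_tac | lra].
    by apply: even_of => //; exists (w + 1); split; [int_tac | lra].
  + by apply: odd_of => //; exists w.
  + by rewrite gnorm_sym.
Qed.

Lemma int_eq {R : realType} (e x : R) : x = e -> isint e -> isint x.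
Proof. by move=> ->. Qed.

Lemma gi_mk {R : realType} {k : nat} (hk : (0 < k)%N) (a y : R) r :
  0 <= a -> isint a -> isint y -> gi (mkT hk a r, y).
Proof. by move=> h1 h2 h3; split=> //=; rewrite mkT_pos. Qed.

Lemma gh_mk {R : realType} {k : nat} (hk : (0 < k)%N) (a y : R) r :
  0 <= a -> isint (a - 1/2) -> isint (y - 1/2) -> gh (mkT hk a r, y).
Proof. by move=> h1 h2 h3; split=> //=; rewrite mkT_pos. Qed.

Lemma inG_gi {R : realType} {k : nat} (P : Gpt R k) : gi P -> inG P.
Proof. by move=> h; apply/inGE; left. Qed.

Lemma inG_gh {R : realType} {k : nat} (P : Gpt R k) : gh P -> inG P.
Proof. by move=> h; apply/inGE; right. Qed.

Lemma gmid_shift {R : realType} {k : nat} (hk : (0 < k)%N) (t d y1 y2 m : R) r :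
  0 <= t - d -> 0 <= d -> (y1 + y2) / 2 = m ->
  gmid (mkT hk (t - d) r, y1) (mkT hk (t + d) r, y2) = (mkT hk t r, m) /\
  gmid (mkT hk (t + d) r, y2) (mkT hk (t - d) r, y1) = (mkT hk t r, m).
Proof.
move=> h1 h2 hm; have [e1 e2] := tmid_shift hk t d r h1 h2.
rewrite /gmid /= e1 e2; split; congr pair; lra.
Qed.

Lemma gmid_same {R : realType} {k : nat} (c : Tstar R k) (y1 y2 m : R) :
  (y1 + y2) / 2 = m -> gmid (c, y1) (c, y2) = (c, m).
Proof. by move=> hm; rewrite /gmid /= tmid_xx hm. Qed.

Lemma gn_one {R : realType} {k : nat} (hk : (0 < k)%N) (a b y y' : R) r :
  0 <= a -> 0 <= b -> (a - b = 1/2 \/ a - b = -(1/2)) -> (y - y' = 1/2 \/ y - y' = -(1/2)) ->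
  gn (mkT hk a r, y) (mkT hk b r, y') = 1.
Proof.
move=> ha hb h1 h2; rewrite gn_mkT //.
have e : `|(1/2 : R)| = 1/2 by rewrite ger0_norm //; lra.
by case: h1 => ->; case: h2 => ->; rewrite ?normrN e; lra.
Qed.

Lemma construct {R : realType} {k : nat} (hk : (0 < k)%N) (t m : R) (r : 'I_k) :
  0 <= t -> isint (2 * t - 2 * m) -> isint (4 * m) -> exists uv, okp (mkT hk t r, m) uv.
Proof.
move=> t0 i1 i2.
have [b [ib [eb|eb]]] := parity _ i2;
  have [u [iu [eu|eu]]] := parity _ ib; have [v [iv [ev|ev]]] := parity _ i1.
- apply: close_same; apply: inG_gi; apply: gi_mk => //.
  + by apply: (int_eq (v + u)); [lra | int_tac].
  + by apply: (int_eq u); [lra | int_tac].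
- have vu : 0 <= v + u by apply: int_ge0; [int_tac | lra].
  have [g1 g2] := gmid_shift hk t (1/2) m m m r ltac:(lra) ltac:(lra) ltac:(lra).
  apply: (close_two (mkT hk (t - 1/2) r, m) (mkT hk (t + 1/2) r, m) (mkT hk t r, m + 1/2)) => //.
  + apply: inG_gi; apply: gi_mk; [lra | apply: (int_eq (v + u)); [lra|int_tac] | apply: (int_eq u); [lra|int_tac]].
  + apply: inG_gi; apply: gi_mk; [lra | apply: (int_eq (v + u + 1)); [lra|int_tac] | apply: (int_eq u); [lra|int_tac]].
  + apply: inG_gh; apply: gh_mk; [lra | apply: (int_eq (v + u)); [lra|int_tac] | apply: (int_eq u); [lra|int_tac]].
  + apply: gi_mk; [lra | apply: (int_eq (v + u)); [lra|int_tac] | apply: (int_eq u); [lra|int_tac]].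
  + apply: gi_mk; [lra | apply: (int_eq (v + u + 1)); [lra|int_tac] | apply: (int_eq u); [lra|int_tac]].
  + apply: gh_mk; [lra | apply: (int_eq (v + u)); [lra|int_tac] | apply: (int_eq u); [lra|int_tac]].
  + apply: gn_one; [lra|lra|by [left; lra|right; lra]|by [left; lra|right; lra]].
  + apply: gn_one; [lra|lra|by [left; lra|right; lra]|by [left; lra|right; lra]].
  + rewrite /= !mkT_pos; lra.
- apply: close_same; apply: inG_gh; apply: gh_mk => //.
  + by apply: (int_eq (v + u)); [lra | int_tac].
  + by apply: (int_eq u); [lra | int_tac].
- have e1 := @gmid_same _ _ (mkT hk t r) (m - 1/2) (m + 1/2) m ltac:(lra).
  have e2 := @gmid_same _ _ (mkT hk t r) (m + 1/2) (m - 1/2) m ltac:(lra).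
  apply: (close_two (mkT hk t r, m - 1/2) (mkT hk t r, m + 1/2) (mkT hk (t + 1/2) r, m)) => //.
  + apply: inG_gi; apply: gi_mk; [lra | apply: (int_eq (v + u + 1)); [lra|int_tac] | apply: (int_eq u); [lra|int_tac]].
  + apply: inG_gi; apply: gi_mk; [lra | apply: (int_eq (v + u + 1)); [lra|int_tac] | apply: (int_eq (u + 1)); [lra|int_tac]].
  + apply: inG_gh; apply: gh_mk; [lra | apply: (int_eq (v + u + 1)); [lra|int_tac] | apply: (int_eq u); [lra|int_tac]].
  + apply: gi_mk; [lra | apply: (int_eq (v + u + 1)); [lra|int_tac] | apply: (int_eq u); [lra|int_tac]].
  + apply: gi_mk; [lra | apply: (int_eq (v + u + 1)); [lra|int_tac] | apply: (int_eq (u + 1)); [lra|int_tac]].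
  + apply: gh_mk; [lra | apply: (int_eq (v + u + 1)); [lra|int_tac] | apply: (int_eq u); [lra|int_tac]].
  + apply: gn_one; [lra|lra|by [left; lra|right; lra]|by [left; lra|right; lra]].
  + apply: gn_one; [lra|lra|by [left; lra|right; lra]|by [left; lra|right; lra]].
  + rewrite /= !mkT_pos; lra.
- have vu : 0 <= v + u by apply: int_ge0; [int_tac | lra].
  have [g1 g2] := gmid_shift hk t (1/4) (m - 1/4) (m + 1/4) m r ltac:(lra) ltac:(lra) ltac:(lra).
  apply: (close_one (mkT hk (t - 1/4) r, m - 1/4) (mkT hk (t + 1/4) r, m + 1/4)) => //.
  + apply: inG_gi; apply: gi_mk; [lra | apply: (int_eq (v + u)); [lra|int_tac] | apply: (int_eq u); [lra|int_tac]].
  + apply: inG_gh; apply: gh_mk; [lra | apply: (int_eq (v + u)); [lra|int_tac] | apply: (int_eq u); [lra|int_tac]].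
  + apply: gn_one; [lra|lra|by [left; lra|right; lra]|by [left; lra|right; lra]].
  + left; split.
    * apply: gi_mk; [lra | apply: (int_eq (v + u)); [lra|int_tac] | apply: (int_eq u); [lra|int_tac]].
    * apply: gh_mk; [lra | apply: (int_eq (v + u)); [lra|int_tac] | apply: (int_eq u); [lra|int_tac]].
- have vu : 0 <= v + u by apply: int_ge0; [int_tac | lra].
  have [g1 g2] := gmid_shift hk t (1/4) (m + 1/4) (m - 1/4) m r ltac:(lra) ltac:(lra) ltac:(lra).
  apply: (close_one (mkT hk (t - 1/4) r, m + 1/4) (mkT hk (t + 1/4) r, m - 1/4)) => //.
  + apply: inG_gh; apply: gh_mk; [lra | apply: (int_eq (v + u)); [lra|int_tac] | apply: (int_eq u); [lra|int_tac]].
  + apply: inG_gi; apply: gi_mk; [lra | apply: (int_eq (v + u + 1)); [lra|int_tac] | apply: (int_eq u); [lra|int_tac]].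
  + apply: gn_one; [lra|lra|by [left; lra|right; lra]|by [left; lra|right; lra]].
  + right; split.
    * apply: gh_mk; [lra | apply: (int_eq (v + u)); [lra|int_tac] | apply: (int_eq u); [lra|int_tac]].
    * apply: gi_mk; [lra | apply: (int_eq (v + u + 1)); [lra|int_tac] | apply: (int_eq u); [lra|int_tac]].
- have vu : 0 <= v + u by apply: int_ge0; [int_tac | lra].
  have [g1 g2] := gmid_shift hk t (1/4) (m - 1/4) (m + 1/4) m r ltac:(lra) ltac:(lra) ltac:(lra).
  apply: (close_one (mkT hk (t - 1/4) r, m - 1/4) (mkT hk (t + 1/4) r, m + 1/4)) => //.
  + apply: inG_gh; apply: gh_mk; [lra | apply: (int_eq (v + u)); [lra|int_tac] | apply: (int_eq u); [lra|int_tac]].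
  + apply: inG_gi; apply: gi_mk; [lra | apply: (int_eq (v + u + 1)); [lra|int_tac] | apply: (int_eq (u + 1)); [lra|int_tac]].
  + apply: gn_one; [lra|lra|by [left; lra|right; lra]|by [left; lra|right; lra]].
  + right; split.
    * apply: gh_mk; [lra | apply: (int_eq (v + u)); [lra|int_tac] | apply: (int_eq u); [lra|int_tac]].
    * apply: gi_mk; [lra | apply: (int_eq (v + u + 1)); [lra|int_tac] | apply: (int_eq (u + 1)); [lra|int_tac]].
- have vu : 0 <= v + u + 1 by apply: int_ge0; [int_tac | lra].
  have [g1 g2] := gmid_shift hk t (1/4) (m + 1/4) (m - 1/4) m r ltac:(lra) ltac:(lra) ltac:(lra).
  apply: (close_one (mkT hk (t - 1/4) r, m + 1/4) (mkT hk (t + 1/4) r, m - 1/4)) => //.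
  + apply: inG_gi; apply: gi_mk; [lra | apply: (int_eq (v + u + 1)); [lra|int_tac] | apply: (int_eq (u + 1)); [lra|int_tac]].
  + apply: inG_gh; apply: gh_mk; [lra | apply: (int_eq (v + u + 1)); [lra|int_tac] | apply: (int_eq u); [lra|int_tac]].
  + apply: gn_one; [lra|lra|by [left; lra|right; lra]|by [left; lra|right; lra]].
  + left; split.
    * apply: gi_mk; [lra | apply: (int_eq (v + u + 1)); [lra|int_tac] | apply: (int_eq (u + 1)); [lra|int_tac]].
    * apply: gh_mk; [lra | apply: (int_eq (v + u + 1)); [lra|int_tac] | apply: (int_eq u); [lra|int_tac]].
Qed.

Lemma gpair_ex {R : realType} {k : nat} (p q : Gpt R k) : inG p -> inG q -> exists uv, gpair_spec p q uv.
Proof.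
move=> hp hq.
have h2t := tpos_tmid p.1 q.1.
have [pa [pb pc]] := inG_ints p hp; have [qa [qb qc]] := inG_ints q hq.
have t0 := tpos_ge0 (tmid p.1 q.1).
have hk := kpos (tmid p.1 q.1).
have ec := mkT_eta hk (tmid p.1 q.1).
have i1 : isint (2 * tpos (tmid p.1 q.1) - 2 * ((p.2 + q.2) / 2)).
  case: h2t => [e|[e|e]].
  - by apply: (int_eq ((tpos p.1 - p.2) + (tpos q.1 - q.2))); [lra | int_tac].
  - by apply: (int_eq ((tpos p.1 - p.2) - (tpos q.1 + q.2))); [lra | int_tac].
  - by apply: (int_eq ((tpos q.1 - q.2) - (tpos p.1 + p.2))); [lra | int_tac].
have i2 : isint (4 * ((p.2 + q.2) / 2)) by apply: (int_eq (2 * p.2 + 2 * q.2)); [lra | int_tac].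
have [uv h] := construct hk (tpos (tmid p.1 q.1)) ((p.2 + q.2) / 2) (tray (tmid p.1 q.1)) t0 i1 i2.
by exists uv; move: h; rewrite ec.
Qed.


Lemma gpair_ok {R : realType} {k : nat} (p q : Gpt R k) : inG p -> inG q ->
  gpair_spec p q (gfloor p q, gceil p q).
Proof.
move=> hp hq; have h : gpair_spec p q (gpair p q) by apply: epsilon_spec; exact: gpair_ex.
by rewrite /gfloor /gceil; move: h; case: (gpair p q).
Qed.

Lemma bigmax_attained {R : realType} n (F : 'I_n -> R) :
  \big[Num.max/0]_(i < n) F i = 0 \/ exists i, \big[Num.max/0]_(i < n) F i = F i.
Proof.
apply: (big_ind (fun x => x = 0 \/ exists i, x = F i)); first by left.
  move=> x y hx hy; case: (leP x y) => _; by [].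
by move=> i _; right; exists i.
Qed.

Theorem lemma4p4 (R : realType) (k n : nat) (hk : (1 <= k)%N)
    (p q : 'I_n -> Gpt R k)
    (hp : forall i, inG (p i)) (hq : forall i, inG (q i))
    (hpq : 2 <= gnormv p q) :
  (gceilv p q <> p /\ gceilv p q <> q) /\
  (gfloorv p q <> p /\ gfloorv p q <> q) /\
  (gnormv p (gceilv p q) < gnormv p q /\ gnormv p (gfloorv p q) < gnormv p q).
Proof.
set D := gnormv p q in hpq *.
have le_i : forall i, gn (p i) (q i) <= D by move=> i; exact: le_bigmax.
have [i0 hi0] : exists i, gn (p i) (q i) = D.
  case: (bigmax_attained _ (fun i => gn (p i) (q i))) => [h|[i h]]; last by exists i.
  by exfalso; move: hpq; rewrite /D /gnormv h; lra.
have B := fun i : 'I_n => comp_bounds _ _ _ _ (gpair_ok _ _ (hp i) (hq i)).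
have [[_ _] [[c1 c2] [c3 c4]]] := B i0.
rewrite hi0 in c1 c2 c3 c4.
split; [split|split; [split|split]].
- move=> e; move: c1; have -> : gceil (p i0) (q i0) = p i0 := congr1 (fun f => f i0) e.
  rewrite gnorm_xx; lra.
- move=> e; move: c3; have -> : gceil (p i0) (q i0) = q i0 := congr1 (fun f => f i0) e.
  rewrite gnorm_xx; lra.
- move=> e; move: c2; have -> : gfloor (p i0) (q i0) = p i0 := congr1 (fun f => f i0) e.
  rewrite gnorm_xx; lra.
- move=> e; move: c4; have -> : gfloor (p i0) (q i0) = q i0 := congr1 (fun f => f i0) e.
  rewrite gnorm_xx; lra.
- rewrite /gnormv; apply: bigmax_lt; first lra.
  move=> i _; have [[b1 _] _] := B i; have := le_i i; rewrite /gceilv; lra.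
- rewrite /gnormv; apply: bigmax_lt; first lra.
  move=> i _; have [[_ b2] _] := B i; have := le_i i; rewrite /gfloorv; lra.
Qed.
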